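(* The embedding functor $i_{\mathrm{tffr}}\colon\mathcal R\hookrightarrow\mathfrak{sl}(2)\text{-}\mathrm{Mod}_{\mathrm{tffr}}$ is a right adjoint of the rationalization functor $F_{\mathrm{rat}}\colon\mathfrak{sl}(2)\text{-}\mathrm{Mod}_{\mathrm{tffr}}\to\mathcal R$. Therefore $\mathcal R$ is a reflective localization of $\mathfrak{sl}(2)\text{-}\mathrm{Mod}_{\mathrm{tffr}}$ with localization functor $F_{\mathrm{rat}}$. Moreover, $F_{\mathrm{rat}}$ is faithful.
   Context: $\mathfrak{sl}(2)$ has basis $L_{-1}=f$, $L_0=-\tfrac12 h$, $L_1=-e$ for a Chevalley basis $e,f,h$. Every $\mathfrak{sl}(2)$-module $(V,\rho)$ is a $\mathbb{C}[z]$-module via $z\cdot v=\rho(L_0)v$. $\mathfrak{sl}(2)\text{-}\mathrm{Mod}_{\mathrm{tffr}}$ is the full subcategory of $\mathfrak{sl}(2)$-modules that are torsion free as $\mathbb{C}[z]$-modules and of finite rank ($S^{-1}V$ finite-dimensional over $\mathbb{C}(z)$, $S=\mathbb{C}[z]\setminus\{0\}$). $\mathcal R$ is its full subcategory of rational modules, i.e. those which with their $\mathbb{C}[z]$-structure are finite-dimensional $\mathbb{C}(z)$-vector spaces. The rationalization functor sends $(V,\rho)$ to $(S^{-1}V,\rho_{\mathrm{rat}})$ with $\rho_{\mathrm{rat}}(L_{\pm1})(v/p(z))=\rho(L_{\pm1})(v)/p(z\pm1)$ and $\rho_{\mathrm{rat}}(L_0)(v/p(z))=zv/p(z)$, and a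 morphism $\phi$ to $S^{-1}\phi$. *)

(* Defs.v *)
From HB Require Import structures.
From mathcomp Require Import all_boot all_order all_algebra.
From mathcomp Require Import reals complex.
From Stdlib Require Import ClassicalEpsilon.

Set Implicit Arguments.
Unset Strict Implicit.
Unset Printing Implicit Defensive.

Import Order.TTheory GRing.Theory Num.Theory.
Local Open Scope ring_scope.

(* sl(2)-modules over a field K, with sl(2) given by a Chevalley basis e,f,h. *)
Section Sl2.
Variable K : fieldType.

Record sl2data := Sl2Data {
  car :> Type;
  vzero : car;
  vadd : car -> car -> car;
  vopp : car -> car;
  vscale : K -> car -> car;
  rho_e : car -> car;
  rho_f : car -> car;
  rho_h : car -> car }.

Definition vsub (M : sl2data) (u v : M) : M := vadd u (vopp v).

Definition K_linear (M N : sl2data) (g : M -> N) : Prop :=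
  (forall u v, g (vadd u v) = vadd (g u) (g v)) /\
  (forall a v, g (vscale a v) = vscale a (g v)).

Definition is_vspace (M : sl2data) : Prop :=
  [/\ associative (@vadd M), commutative (@vadd M),
      left_id (vzero M) (@vadd M) & left_inverse (vzero M) (@vopp M) (@vadd M)] /\
  [/\ (forall a b (v : M), vscale a (vscale b v) = vscale (a * b) v),
      (forall v : M, vscale 1 v = v),
      (forall a, {morph @vscale M a : u v / vadd u v}) &
      (forall v : M, {morph @vscale M ^~ v : a b / a + b >-> vadd a b})].

Definition is_sl2mod (M : sl2data) : Prop :=
  [/\ is_vspace M, K_linear (@rho_e M), K_linear (@rho_f M) & K_linear (@rho_h M)] /\
  [/\ (forall v : M, vsub (rho_e (rho_f v)) (rho_f (rho_e v)) = rho_h v),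
      (forall v : M, vsub (rho_h (rho_e v)) (rho_e (rho_h v)) = vscale 2 (rho_e v)) &
      (forall v : M, vsub (rho_h (rho_f v)) (rho_f (rho_h v)) = vscale (- 2) (rho_f v))].

Definition rhoLm1 (M : sl2data) (v : M) : M := rho_f v.
Definition rhoL0 (M : sl2data) (v : M) : M := vscale (- 2^-1) (rho_h v).
Definition rhoL1 (M : sl2data) (v : M) : M := vopp (rho_e v).

(* The K[z]-module structure: p . v = p(rho(L_0)) v. *)
Definition pact (M : sl2data) (p : {poly K}) (v : M) : M :=
  \big[@vadd M/vzero M]_(i < size p) vscale p`_i (iter i (@rhoL0 M) v).

Definition torsion_free (M : sl2data) : Prop :=
  forall (p : {poly K}) (v : M), p != 0 -> pact p v = vzero M -> v = vzero M.

(* Finite rank: S^{-1}M is finite dimensional over K(z), i.e. finitely many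
   vectors v_1..v_n whose images span S^{-1}M over K(z): every v has a nonzero
   multiple p.v lying in the K[z]-span of v_1..v_n. *)
Definition finite_rank (M : sl2data) : Prop :=
  exists vs : seq M, forall v : M, exists2 p : {poly K}, p != 0 &
    exists cs : seq {poly K}, size cs = size vs /\
      pact p v = \big[@vadd M/vzero M]_(x <- zip cs vs) pact x.1 x.2.

Definition tffr (M : sl2data) : Prop :=
  [/\ is_sl2mod M, torsion_free M & finite_rank M].

(* Objects of the full subcategory R of rational modules: the K[z]-structure
   extends to a (finite dimensional) K(z)-vector space structure, i.e. every
   nonzero polynomial acts bijectively. *)
Definition rational_mod (M : sl2data) : Prop :=
  tffr M /\ forall p : {poly K}, p != 0 -> bijective (pact (M := M) p).

Definition sl2_morphism (M N : sl2data) (g : M -> N) : Prop :=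
  [/\ K_linear g, (forall v, g (rho_e v) = rho_e (g v)),
      (forall v, g (rho_f v) = rho_f (g v)) & (forall v, g (rho_h v) = rho_h (g v))].

(* Rationalization S^{-1}M : fractions v / p (p <> 0) modulo the usual        *)
(* localization relation  v/p ~ w/q  iff  s.(q.v - p.w) = 0 for some s <> 0.  *)
Definition loc_rel (M : sl2data) (x y : M * {poly K}) : Prop :=
  exists2 s : {poly K}, s != 0 & pact s (vsub (pact y.2 x.1) (pact x.2 y.1)) = vzero M.

Definition loc_cls (M : sl2data) (x : M * {poly K}) : M * {poly K} -> Prop :=
  fun y => y.2 != 0 /\ loc_rel x y.

Definition loc_car (M : sl2data) : Type :=
  {P : M * {poly K} -> Prop | exists x : M * {poly K}, x.2 != 0 /\ P = loc_cls x}.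

(* normalize a pair so that its denominator is nonzero (only used on pairs
   with nonzero denominator anyway) *)
Definition nzden (M : sl2data) (x : M * {poly K}) : M * {poly K} :=
  if x.2 == 0 then (x.1, 1) else x.

Lemma nzden_neq0 (M : sl2data) (x : M * {poly K}) : (nzden x).2 != 0.
Proof. rewrite /nzden; case: ifP => [_|/negbT //]; exact: oner_neq0. Qed.

Definition frac (M : sl2data) (x : M * {poly K}) : loc_car M :=
  exist _ (loc_cls (nzden x)) (ex_intro _ (nzden x) (conj (nzden_neq0 x) erefl)).

Definition rep (M : sl2data) (a : loc_car M) : M * {poly K} :=
  proj1_sig (constructive_indefinite_description _ (proj2_sig a)).

Definition shiftp (c : K) (p : {poly K}) : {poly K} := p \Po ('X + c%:P).

Definition rat_data (M : sl2data) : sl2data :=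
  @Sl2Data (loc_car M)
    (frac (vzero M, 1))
    (fun a b => frac (vadd (pact (rep b).2 (rep a).1) (pact (rep a).2 (rep b).1),
                      (rep a).2 * (rep b).2))
    (fun a => frac (vopp (rep a).1, (rep a).2))
    (fun c a => frac (vscale c (rep a).1, (rep a).2))
    (fun a => frac (rho_e (rep a).1, shiftp 1 (rep a).2))
    (fun a => frac (rho_f (rep a).1, shiftp (- 1) (rep a).2))
    (fun a => frac (rho_h (rep a).1, (rep a).2)).

Definition rat_map (M N : sl2data) (g : M -> N) : rat_data M -> rat_data N :=
  fun a => frac (g (rep a).1, (rep a).2).

End Sl2.

(* Main.v *)
Require Import Defs.
From HB Require Import structures.
From mathcomp Require Import all_boot all_order all_algebra.
From mathcomp Require Import reals complex.
From mathcomp Require Import boolp.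
From Stdlib Require Import ProofIrrelevance FunctionalExtensionality PropExtensionality.
From mathcomp Require Import ring.
Import Defs.
Set Implicit Arguments.
Unset Strict Implicit.
Unset Printing Implicit Defensive.
Import Order.TTheory GRing.Theory Num.Theory.
Local Open Scope ring_scope.

Section VT.
Variable K : fieldType.
Definition VT (M : sl2data K) (HM : is_vspace M) : Type := car M.
HB.instance Definition _ M HM := gen_eqMixin (@VT M HM).
HB.instance Definition _ M HM := gen_choiceMixin (@VT M HM).
Section S.
Variables (M : sl2data K) (HM : is_vspace M).
Lemma vs_addA : associative (@vadd _ M). Proof. by case: HM => -[]. Qed.
Lemma vs_addC : commutative (@vadd _ M). Proof. by case: HM => -[]. Qed.
Lemma vs_add0 : left_id (vzero M) (@vadd _ M). Proof. by case: HM => -[]. Qed.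
Lemma vs_addN : left_inverse (vzero M) (@vopp _ M) (@vadd _ M). Proof. by case: HM => -[]. Qed.
Lemma vs_scaleA a b (v : M) : vscale a (vscale b v) = vscale (a * b) v. Proof. by case: HM => _ []. Qed.
Lemma vs_scale1 (v : M) : vscale 1 v = v. Proof. by case: HM => _ []. Qed.
Lemma vs_scaleDr a : {morph @vscale _ M a : u v / vadd u v}. Proof. by case: HM => _ []. Qed.
Lemma vs_scaleDl (v : M) : {morph @vscale _ M ^~ v : a b / a + b >-> vadd a b}. Proof. by case: HM => _ []. Qed.
End S.
HB.instance Definition _ M HM := GRing.isZmodule.Build (@VT M HM) (vs_addA HM) (vs_addC HM) (vs_add0 HM) (vs_addN HM).
HB.instance Definition _ M HM := GRing.Zmodule_isLmodule.Build K (@VT M HM) (vs_scaleA HM) (vs_scale1 HM) (vs_scaleDr HM) (vs_scaleDl HM).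
Section T.
Variables (M : sl2data K) (HM : is_vspace M).
Lemma vaddE (u v : M) : vadd u v = (u : VT HM) + v. Proof. by []. Qed.
Lemma vscaleE a (v : M) : vscale a v = a *: (v : VT HM). Proof. by []. Qed.
Lemma vzeroE : vzero M = 0 :> VT HM. Proof. by []. Qed.
Lemma voppE (v : M) : vopp v = - (v : VT HM). Proof. by []. Qed.
Lemma pactE p (v : M) : pact p v = \sum_(i < size p) p`_i *: (iter i (@rhoL0 _ M) v : VT HM).
Proof. by []. Qed.
End T.
End VT.

Section PactF.
Variables (K : fieldType) (V W : lmodType K) (f : V -> V).
Hypotheses (fD : forall u v, f (u + v) = f u + f v) (fZ : forall a v, f (a *: v) = a *: f v).

Definition pactf (f : V -> V) (p : {poly K}) (v : V) := \sum_(i < size p) p`_i *: iter i f v.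

Lemma lin0 : f 0 = 0.
Proof. by rewrite -(scale0r 0) fZ !scale0r. Qed.

Lemma iterD i u v : iter i f (u + v) = iter i f u + iter i f v.
Proof. by elim: i => //= i ->; rewrite fD. Qed.
Lemma iterZ i a v : iter i f (a *: v) = a *: iter i f v.
Proof. by elim: i => //= i ->; rewrite fZ. Qed.

Lemma pactf_widen n (p : {poly K}) (v : V) : (size p <= n)%N -> pactf f p v = \sum_(i < n) p`_i *: iter i f v.
Proof.
move=> H; rewrite /pactf (big_ord_widen n (fun i => p`_i *: iter i f v) H) big_mkcond.
apply: eq_bigr => i _; case: ifP => // /negbT; rewrite -leqNgt => Hi.
by rewrite nth_default // scale0r.
Qed.

Lemma pactf0 v : pactf f 0 v = 0.
Proof. by rewrite /pactf size_poly0 big_ord0. Qed.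

Lemma pactfD p q v : pactf f (p + q) v = pactf f p v + pactf f q v.
Proof.
rewrite !(@pactf_widen (maxn (size p) (size q))) ?leq_maxl ?leq_maxr ?size_add //.
by rewrite -big_split; apply: eq_bigr => i _; rewrite coefD scalerDl.
Qed.

Lemma pactfZp c p v : pactf f (c *: p) v = c *: pactf f p v.
Proof.
rewrite !(@pactf_widen (size p)) ?size_scale_leq // scaler_sumr.
by apply: eq_bigr => i _; rewrite coefZ scalerA.
Qed.

Lemma pactfC c v : pactf f c%:P v = c *: v.
Proof. by rewrite (@pactf_widen 1) ?size_polyC_leq1 // big_ord1 coefC. Qed.

Lemma pactf1 v : pactf f 1 v = v.
Proof. by rewrite pactfC scale1r. Qed.

Lemma pactfvD p u v : pactf f p (u + v) = pactf f p u + pactf f p v.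
Proof. by rewrite /pactf -big_split; apply: eq_bigr => i _; rewrite iterD scalerDr. Qed.

Lemma pactfvZ p a v : pactf f p (a *: v) = a *: pactf f p v.
Proof.
rewrite /pactf scaler_sumr; apply: eq_bigr => i _.
by rewrite iterZ !scalerA mulrC.
Qed.

Lemma pactfv0 p : pactf f p 0 = 0.
Proof. by rewrite -[X in pactf f p X](scale0r (0 : V)) pactfvZ scale0r. Qed.

Lemma f_sum n (F : 'I_n -> V) : f (\sum_(i < n) F i) = \sum_(i < n) f (F i).
Proof. exact: (big_morph f fD lin0). Qed.

Lemma f_pactf p v : f (pactf f p v) = pactf f p (f v).
Proof.
rewrite /pactf f_sum; apply: eq_bigr => i _.
by rewrite fZ -iterSr.
Qed.

Lemma pactfMX p v : pactf f (p * 'X) v = pactf f p (f v).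
Proof.
rewrite (@pactf_widen (size p).+1); last first.
  by apply: leq_trans (size_mul_leq _ _) _; rewrite size_polyX addn2.
rewrite big_ord_recl coefMX /= scale0r add0r /pactf.
by apply: eq_bigr => i _; rewrite coefMX /= add0n -iterSr.
Qed.

Lemma pactfM p q v : pactf f (p * q) v = pactf f p (pactf f q v).
Proof.
move: v; elim/poly_ind: p => [|p c IH] v; first by rewrite mul0r !pactf0.
rewrite mulrDl mulrAC pactfD pactfMX IH -f_pactf mul_polyC pactfZp.
by rewrite pactfD pactfMX pactfC.
Qed.

Lemma pactfXc c v : pactf f ('X + c%:P) v = f v + c *: v.
Proof. by rewrite pactfD -(mul1r 'X) pactfMX pactf1 pactfC. Qed.

End PactF.

Section PactComm.
Variables (K : fieldType) (V W : lmodType K) (f : V -> V) (f' : W -> W) (g : V -> W).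
Hypotheses (fD : forall u v, f (u + v) = f u + f v) (fZ : forall a v, f (a *: v) = a *: f v).
Hypotheses (f'D : forall u v, f' (u + v) = f' u + f' v) (f'Z : forall a v, f' (a *: v) = a *: f' v).
Hypotheses (gD : forall u v, g (u + v) = g u + g v) (gZ : forall a v, g (a *: v) = a *: g v).

Lemma pactf_comm c : (forall v, g (f v) = f' (g v) + c *: g v) ->
  forall p v, g (pactf f p v) = pactf f' (p \Po ('X + c%:P)) (g v).
Proof.
move=> Hc p; have g0 : g 0 = 0 by have := gZ 0 0; rewrite !scale0r.
elim/poly_ind: p => [|p a IH] v.
  by rewrite comp_poly0 !pactf0 g0.
rewrite pactfD pactfMX pactfC gD IH gZ Hc.
rewrite comp_polyD comp_polyM comp_polyX comp_polyC pactfD pactfC.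
by rewrite pactfM // pactfXc.
Qed.

Lemma pactf_morph : (forall v, g (f v) = f' (g v)) ->
  forall p v, g (pactf f p v) = pactf f' p (g v).
Proof.
move=> H p v; rewrite (@pactf_comm 0) ?polyC0 ?addr0 ?comp_polyXr // => w.
by rewrite scale0r addr0.
Qed.
End PactComm.

Lemma sl2_vspace (K : fieldType) (M : sl2data K) : is_sl2mod M -> is_vspace M.
Proof. by case=> -[]. Qed.


Lemma sig_eq (A : Type) (P : A -> Prop) (a b : sig P) : proj1_sig a = proj1_sig b -> a = b.
Proof.
case: a b => a Ha [b Hb] /= E; subst b; congr exist; exact: proof_irrelevance.
Qed.

Definition pscale (K : fieldType) (M : sl2data K) (p : {poly K}) (x : M * {poly K}) :=
  (pact p x.1, p * x.2).
Definition addP (K : fieldType) (M : sl2data K) (x y : M * {poly K}) :=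
  (vadd (pact y.2 x.1) (pact x.2 y.1), x.2 * y.2).

Lemma shiftp_eq0 (K : fieldType) c (p : {poly K}) : (shiftp c p == 0) = (p == 0).
Proof. by rewrite /shiftp comp_poly_eq0 // size_XaddC. Qed.
Lemma shiftp_neq0 (K : fieldType) c (p : {poly K}) : p != 0 -> shiftp c p != 0.
Proof. by rewrite shiftp_eq0. Qed.
Lemma shiftpM (K : fieldType) c (p q : {poly K}) : shiftp c (p * q) = shiftp c p * shiftp c q.
Proof. by rewrite /shiftp comp_polyM. Qed.
Lemma shiftp1 (K : fieldType) c : shiftp c (1 : {poly K}) = 1.
Proof. by rewrite /shiftp -polyC1 comp_polyC. Qed.
Lemma shiftpK (K : fieldType) (p : {poly K}) : shiftp 1 (shiftp (- 1) p) = p.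
Proof.
rewrite /shiftp -comp_polyA comp_polyD comp_polyX comp_polyC -addrA -polyCD.
by rewrite subrr polyC0 addr0 comp_polyXr.
Qed.

Section Mod.
Variables (K : fieldType) (two : (2 : K) != 0) (M : sl2data K) (HM : is_sl2mod M).
Local Notation HV := (sl2_vspace HM).
Local Notation V := (VT HV).
Local Notation pr := (car M * {poly K})%type.

Lemma vsubE (u v : V) : vsub u v = u - v :> V. Proof. by []. Qed.
Lemma toV (u v : car M) : u = v -> u = v :> V. Proof. by []. Qed.
Lemma ofV (u v : car M) : u = v :> V -> u = v. Proof. by []. Qed.
Lemma vaddV (u v : V) : vadd u v = u + v :> V. Proof. by []. Qed.
Lemma vscaleV a (v : V) : vscale a v = a *: v :> V. Proof. by []. Qed.
Lemma voppV (v : V) : vopp v = - v :> V. Proof. by []. Qed.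
Lemma vzeroV : vzero M = 0 :> V. Proof. by []. Qed.

Lemma eD (u v : V) : rho_e (u + v) = (rho_e u : V) + (rho_e v : V) :> V.
Proof. by have [[_ [H _] _ _] _] := HM; apply: H. Qed.
Lemma eZ a (v : V) : rho_e (a *: v) = a *: (rho_e v : V) :> V.
Proof. by have [[_ [_ H] _ _] _] := HM; apply: H. Qed.
Lemma fD (u v : V) : rho_f (u + v) = (rho_f u : V) + (rho_f v : V) :> V.
Proof. by have [[_ _ [H _] _] _] := HM; apply: H. Qed.
Lemma fZ a (v : V) : rho_f (a *: v) = a *: (rho_f v : V) :> V.
Proof. by have [[_ _ [_ H] _] _] := HM; apply: H. Qed.
Lemma hD (u v : V) : rho_h (u + v) = (rho_h u : V) + (rho_h v : V) :> V.
Proof. by have [[_ _ _ [H _]] _] := HM; apply: H. Qed.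
Lemma hZ a (v : V) : rho_h (a *: v) = a *: (rho_h v : V) :> V.
Proof. by have [[_ _ _ [_ H]] _] := HM; apply: H. Qed.
Lemma brEF (v : V) : (rho_e (rho_f v) : V) - (rho_f (rho_e v) : V) = rho_h v :> V.
Proof. by have [_ [H _ _]] := HM; apply: H. Qed.
Lemma brHE (v : V) : (rho_h (rho_e v) : V) - (rho_e (rho_h v) : V) = 2 *: (rho_e v : V) :> V.
Proof. by have [_ [_ H _]] := HM; apply: H. Qed.
Lemma brHF (v : V) : (rho_h (rho_f v) : V) - (rho_f (rho_h v) : V) = (- 2) *: (rho_f v : V) :> V.
Proof. by have [_ [_ _ H]] := HM; apply: H. Qed.

Definition L0 : V -> V := @rhoL0 K M.
Lemma L0D (u v : V) : L0 (u + v) = L0 u + L0 v.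
Proof. by rewrite /L0 /rhoL0 !vscaleV hD scalerDr. Qed.
Lemma L0Z a (v : V) : L0 (a *: v) = a *: L0 v.
Proof. by rewrite /L0 /rhoL0 !vscaleV hZ !scalerA mulrC. Qed.

Lemma pactfE p (v : M) : pact p v = pactf L0 p v. Proof. by []. Qed.

Lemma pactD p q (v : V) : pact (p + q) v = (pact p v : V) + (pact q v : V) :> V.
Proof. by rewrite !pactfE pactfD. Qed.
Lemma pactM p q (v : V) : pact (p * q) v = pact p (pact q v) :> V.
Proof. by rewrite !pactfE (pactfM L0D L0Z). Qed.
Lemma pactC c (v : V) : pact c%:P v = c *: v :> V.
Proof. by rewrite !pactfE pactfC. Qed.
Lemma pact1 (v : V) : pact 1 v = v :> V.
Proof. by rewrite !pactfE pactf1. Qed.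
Lemma pact0 (v : V) : pact 0 v = 0 :> V.
Proof. by rewrite !pactfE pactf0. Qed.
Lemma pactvD p (u v : V) : pact p (u + v) = (pact p u : V) + (pact p v : V) :> V.
Proof. by rewrite !pactfE (pactfvD L0D). Qed.
Lemma pactvZ p a (v : V) : pact p (a *: v) = a *: (pact p v : V) :> V.
Proof. by rewrite !pactfE (pactfvZ L0Z). Qed.
Lemma pactv0 p : pact p (0 : V) = 0 :> V.
Proof. by rewrite !pactfE (pactfv0 L0Z). Qed.
Lemma pactvN p (v : V) : pact p (- v) = - (pact p v : V) :> V.
Proof. by rewrite -scaleN1r pactvZ scaleN1r. Qed.
Lemma pactvB p (u v : V) : pact p (u - v) = (pact p u : V) - (pact p v : V) :> V.
Proof. by rewrite pactvD pactvN. Qed.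
Lemma pactA p q (v : V) : pact p (pact q v) = pact q (pact p v) :> V.
Proof. by rewrite -!pactM mulrC. Qed.

Lemma e_L0 (v : V) : rho_e (L0 v) = L0 (rho_e v) + 1 *: (rho_e v : V) :> V.
Proof.
rewrite /L0 /rhoL0 !vscaleV eZ.
have -> : rho_e (rho_h v) = (rho_h (rho_e v) : V) - 2 *: (rho_e v : V) :> V.
  by rewrite -brHE opprB addrC subrK.
rewrite scalerBr scalerA mulNr mulVf // scaleN1r opprK scale1r.
by [].
Qed.

Lemma f_L0 (v : V) : rho_f (L0 v) = L0 (rho_f v) + (- 1) *: (rho_f v : V) :> V.
Proof.
rewrite /L0 /rhoL0 !vscaleV fZ.
have -> : rho_f (rho_h v) = (rho_h (rho_f v) : V) + 2 *: (rho_f v : V) :> V.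
  by rewrite -(opprK (2 *: (rho_f v : V))) -scaleNr -brHF opprB addrC subrK.
by rewrite scalerDr scalerA mulNr mulVf // scaleN1r.
Qed.

Lemma h_L0 (v : V) : rho_h (L0 v) = L0 (rho_h v) :> V.
Proof. by rewrite /L0 /rhoL0 !vscaleV hZ. Qed.

Lemma e_pact p (v : V) : rho_e (pact p v) = pact (shiftp 1 p) (rho_e v) :> V.
Proof.
by rewrite !pactfE (pactf_comm L0D L0Z eD eZ e_L0).
Qed.

Lemma f_pact p (v : V) : rho_f (pact p v) = pact (shiftp (- 1) p) (rho_f v) :> V.
Proof.
by rewrite !pactfE (pactf_comm L0D L0Z fD fZ f_L0).
Qed.

Lemma h_pact p (v : V) : rho_h (pact p v) = pact p (rho_h v) :> V.
Proof.
by rewrite !pactfE (pactf_morph L0D L0Z hD hZ h_L0).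
Qed.


Lemma relE (x y : pr) : loc_rel x y <->
  exists2 s : {poly K}, s != 0 & pact (s * y.2) x.1 = pact (s * x.2) y.1 :> V.
Proof.
rewrite /loc_rel; split=> -[s Hs H]; exists s => //.
  move/toV: H; rewrite vsubE pactvB vzeroV => /subr0_eq.
  by rewrite -!pactM.
by apply: ofV; rewrite vsubE pactvB -!pactM H subrr.
Qed.

Lemma rel_refl (x : pr) : loc_rel x x.
Proof. by apply/relE; exists 1; rewrite ?oner_neq0. Qed.

Lemma rel_sym (x y : pr) : loc_rel x y -> loc_rel y x.
Proof. by move=> /relE [s Hs H]; apply/relE; exists s. Qed.

Lemma rel_trans (x y z : pr) : y.2 != 0 -> loc_rel x y -> loc_rel y z -> loc_rel x z.
Proof.
move=> hy /relE [s Hs H1] /relE [t Ht H2]; apply/relE; exists (s * t * y.2).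
  by rewrite !mulf_neq0.
have -> : s * t * y.2 * z.2 = (t * z.2) * (s * y.2) by ring.
rewrite pactM H1 pactA H2 -pactM.
have -> : s * x.2 * (t * y.2) = s * t * y.2 * x.2 by ring.
by [].
Qed.

Lemma nzdenE (x : pr) : x.2 != 0 -> nzden x = x.
Proof. by rewrite /nzden => /negbTE ->. Qed.

Lemma frac_eq (x y : pr) : x.2 != 0 -> y.2 != 0 -> loc_rel x y -> frac x = frac y.
Proof.
move=> hx hy hr; apply: sig_eq => /=; rewrite !nzdenE //.
apply: functional_extensionality => z; apply: propositional_extensionality.
rewrite /loc_cls; split=> -[hz r]; split=> //.
  exact: (rel_trans hx (rel_sym hr) r).
exact: (rel_trans hy hr r).
Qed.

Lemma frac_rel (x y : pr) : x.2 != 0 -> y.2 != 0 -> frac x = frac y -> loc_rel x y.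
Proof.
move=> hx hy /(f_equal (@proj1_sig _ _)) /=; rewrite !nzdenE // => E.
have : loc_cls y y by split; [|apply: rel_refl].
by rewrite -E => -[_ r].
Qed.

Lemma rep_spec (a : loc_car M) : (rep a).2 != 0 /\ proj1_sig a = loc_cls (rep a).
Proof. exact: (proj2_sig (ClassicalEpsilon.constructive_indefinite_description _ (proj2_sig a))). Qed.

Lemma rep_nz (a : loc_car M) : (rep a).2 != 0.
Proof. by case: (rep_spec a). Qed.

Lemma frac_rep (a : loc_car M) : frac (rep a) = a.
Proof. by apply: sig_eq => /=; rewrite nzdenE ?rep_nz //; case: (rep_spec a). Qed.

Lemma frac_surj (a : loc_car M) : exists x : pr, x.2 != 0 /\ a = frac x.
Proof. by exists (rep a); rewrite rep_nz frac_rep. Qed.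

Lemma rep_frac (x : pr) : x.2 != 0 -> loc_rel (rep (frac x)) x.
Proof. by move=> hx; apply: frac_rel; rewrite ?rep_nz ?frac_rep. Qed.

Lemma rel_pscale (x y : pr) : x.2 != 0 -> y.2 != 0 -> loc_rel x y ->
  exists p q, [/\ p != 0, q != 0 & pscale p x = pscale q y].
Proof.
move=> hx hy /relE [s Hs H]; exists (s * y.2), (s * x.2); split; rewrite ?mulf_neq0 //.
rewrite /pscale H; congr (_, _); ring.
Qed.

Lemma frac_scale p (x : pr) : p != 0 -> x.2 != 0 -> frac (pscale p x) = frac x.
Proof.
move=> hp hx; apply: frac_eq; rewrite /= ?mulf_neq0 //.
apply/relE; exists 1; rewrite ?oner_neq0 //= -pactM.
have -> : 1 * x.2 * p = 1 * (p * x.2) by ring.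
by [].
Qed.

Lemma rep_pscale (x : pr) : x.2 != 0 ->
  exists p q, [/\ p != 0, q != 0 & pscale p (rep (frac x)) = pscale q x].
Proof. by move=> hx; apply: rel_pscale; rewrite ?rep_nz //; apply: rep_frac. Qed.

Lemma frac0 d : d != 0 -> frac (vzero M, d) = frac (vzero M, 1).
Proof.
move=> hd; apply: frac_eq; rewrite ?oner_neq0 //; apply/relE.
by exists 1; rewrite ?oner_neq0 //= vzeroV !pactv0.
Qed.

End Mod.

Section Op.
Variables (K : fieldType) (M N : sl2data K) (HM : is_sl2mod M) (HN : is_sl2mod N).

Lemma op_compat (O : M * {poly K} -> N * {poly K}) (phi : {poly K} -> {poly K}) :
  (forall q, q != 0 -> phi q != 0) -> (forall x, x.2 != 0 -> (O x).2 != 0) ->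
  (forall q x, O (pscale q x) = pscale (phi q) (O x)) ->
  forall x, x.2 != 0 -> frac (O (rep (frac x))) = frac (O x).
Proof.
move=> Hphi HO HOs x hx; have [p [q [hp hq E]]] := rep_pscale HM hx.
rewrite -(frac_scale HN (Hphi _ hp) (HO _ (rep_nz _))) -HOs E HOs.
by rewrite frac_scale // ?Hphi ?HO.
Qed.
End Op.

Lemma shiftpD (K : fieldType) a b (p : {poly K}) : shiftp a (shiftp b p) = shiftp (a + b) p.
Proof.
by rewrite /shiftp -comp_polyA comp_polyD comp_polyX comp_polyC -addrA -polyCD.
Qed.
Lemma shiftp0 (K : fieldType) (p : {poly K}) : shiftp 0 p = p.
Proof. by rewrite /shiftp polyC0 addr0 comp_polyXr. Qed.

Section Q2.
Variables (K : fieldType) (two : (2 : K) != 0) (M : sl2data K) (HM : is_sl2mod M).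
Local Notation HV := (sl2_vspace HM).
Local Notation V := (VT HV).
Local Notation pr := (car M * {poly K})%type.
Local Notation Q := (rat_data M).

Lemma pact_eqp p q (v : V) : p = q -> pact p v = pact q v :> V.
Proof. by move->. Qed.

Lemma addP_pscale p q (x y : pr) : addP (pscale p x) (pscale q y) = pscale (p * q) (addP x y).
Proof.
rewrite /addP /pscale /=; congr (_, _); last by ring.
apply: ofV; rewrite !vaddV pactvD -!pactM.
by congr (_ + _); apply: pact_eqp; ring.
Qed.

Lemma addP_nz (x y : pr) : x.2 != 0 -> y.2 != 0 -> (addP x y).2 != 0.
Proof. by move=> hx hy; rewrite /= mulf_neq0. Qed.

Lemma frac_add (x y : pr) : x.2 != 0 -> y.2 != 0 ->
  @vadd _ Q (frac x) (frac y) = frac (addP x y).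
Proof.
move=> hx hy.
change (frac (addP (rep (frac x)) (rep (frac y))) = frac (addP x y)).
have [p [q [hp hq E1]]] := rep_pscale HM hx.
have [p' [q' [hp' hq' E2]]] := rep_pscale HM hy.
rewrite -(frac_scale HM (mulf_neq0 hp hp') (addP_nz (rep_nz _) (rep_nz _))).
by rewrite -addP_pscale E1 E2 addP_pscale frac_scale ?mulf_neq0 ?addP_nz.
Qed.

Lemma frac_opp (x : pr) : x.2 != 0 -> @vopp _ Q (frac x) = frac (vopp x.1, x.2).
Proof.
move=> hx; apply: (@op_compat _ _ _ HM HM (fun z => (vopp z.1, z.2)) id) => // q z.
by rewrite /pscale /=; congr (_, _); apply: ofV; rewrite !voppV pactvN.
Qed.

Lemma frac_scaleQ c (x : pr) : x.2 != 0 -> @vscale _ Q c (frac x) = frac (vscale c x.1, x.2).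
Proof.
move=> hx; apply: (@op_compat _ _ _ HM HM (fun z => (vscale c z.1, z.2)) id) => // q z.
by rewrite /pscale /=; congr (_, _); apply: ofV; rewrite !vscaleV pactvZ.
Qed.

Lemma frac_e (x : pr) : x.2 != 0 -> @rho_e _ Q (frac x) = frac (rho_e x.1, shiftp 1 x.2).
Proof.
move=> hx; apply: (@op_compat _ _ _ HM HM (fun z => (rho_e z.1, shiftp 1 z.2)) (shiftp 1)) => //.
- by move=> q; apply: shiftp_neq0.
- by move=> z; apply: shiftp_neq0.
by move=> q z; rewrite /pscale /=; congr (_, _); [apply: ofV; rewrite e_pact | rewrite shiftpM].
Qed.

Lemma frac_f (x : pr) : x.2 != 0 -> @rho_f _ Q (frac x) = frac (rho_f x.1, shiftp (- 1) x.2).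
Proof.
move=> hx; apply: (@op_compat _ _ _ HM HM (fun z => (rho_f z.1, shiftp (- 1) z.2)) (shiftp (- 1))) => //.
- by move=> q; apply: shiftp_neq0.
- by move=> z; apply: shiftp_neq0.
by move=> q z; rewrite /pscale /=; congr (_, _); [apply: ofV; rewrite f_pact | rewrite shiftpM].
Qed.

Lemma frac_h (x : pr) : x.2 != 0 -> @rho_h _ Q (frac x) = frac (rho_h x.1, x.2).
Proof.
move=> hx; apply: (@op_compat _ _ _ HM HM (fun z => (rho_h z.1, z.2)) id) => // q z.
by rewrite /pscale /=; congr (_, _); apply: ofV; rewrite h_pact.
Qed.

Lemma frac_addsame (u w : M) d : d != 0 ->
  @vadd _ Q (frac (u, d)) (frac (w, d)) = frac (vadd u w, d).
Proof.
move=> hd; rewrite frac_add // -(@frac_scale _ _ HM d (vadd u w, d)) //.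
by congr frac; rewrite /addP /pscale /=; congr (_, _); apply: ofV; rewrite !vaddV pactvD.
Qed.

Lemma frac_subsame (u w : M) d : d != 0 ->
  @vsub _ Q (frac (u, d)) (frac (w, d)) = frac (vsub u w, d).
Proof. by move=> hd; rewrite /vsub frac_opp // frac_addsame. Qed.

Lemma frac_L0 (x : pr) : x.2 != 0 -> @rhoL0 _ Q (frac x) = frac (rhoL0 x.1, x.2).
Proof. by move=> hx; rewrite /rhoL0 frac_h // frac_scaleQ. Qed.

Lemma frac_iterL0 i (x : pr) : x.2 != 0 ->
  iter i (@rhoL0 _ Q) (frac x) = frac (iter i (@rhoL0 _ M) x.1, x.2).
Proof. by move=> hx; elim: i => [|i IH]; [case: x hx | rewrite !iterS IH frac_L0]. Qed.

Lemma frac_sumd n (F : 'I_n -> M) d : d != 0 ->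
  \big[@vadd _ Q/vzero Q]_(i < n) frac (F i, d) = frac (\big[@vadd _ M/vzero M]_(i < n) F i, d).
Proof.
move=> hd; elim: n F => [|n IH] F; first by rewrite !big_ord0 frac0.
by rewrite !big_ord_recl IH frac_addsame.
Qed.

Lemma pact_frac p (x : pr) : x.2 != 0 -> @pact _ Q p (frac x) = frac (pact p x.1, x.2).
Proof.
move=> hx; rewrite /pact.
under eq_bigr => i _ do rewrite frac_iterL0 // frac_scaleQ //.
by rewrite frac_sumd.
Qed.

End Q2.

Section Q3.
Variables (K : fieldType) (two : (2 : K) != 0) (M : sl2data K) (HM : is_sl2mod M).
Local Notation HV := (sl2_vspace HM).
Local Notation V := (VT HV).
Local Notation pr := (car M * {poly K})%type.
Local Notation Q := (rat_data M).

Lemma Q_vspace : is_vspace Q.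
Proof.
split; split.
- move=> a b c.
  have [x [hx ->]] := frac_surj a; have [y [hy ->]] := frac_surj b.
  have [z [hz ->]] := frac_surj c.
  rewrite !frac_add ?addP_nz //; congr frac; rewrite /addP /=; congr (_, _); last by ring.
  apply: ofV; rewrite !vaddV !pactvD -!pactM addrA.
  by congr (_ + _ + _); apply: pact_eqp; ring.
- move=> a b.
  have [x [hx ->]] := frac_surj a; have [y [hy ->]] := frac_surj b.
  rewrite !frac_add //; congr frac; rewrite /addP /=; congr (_, _); last by ring.
  by apply: ofV; rewrite !vaddV addrC.
- move=> a; have [x [hx ->]] := frac_surj a.
  change (@vadd _ Q (frac (vzero M, 1)) (frac x) = frac x).
  rewrite frac_add ?oner_neq0 //; congr frac; rewrite /addP /=.
  case: x hx => v d hx /=; congr (_, _); last by rewrite mul1r.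
  by apply: ofV; rewrite vaddV vzeroV pactv0 pact1 add0r.
- move=> a; have [x [hx ->]] := frac_surj a.
  change (@vadd _ Q (@vopp _ Q (frac x)) (frac x) = frac (vzero M, 1)).
  rewrite frac_opp // frac_add // -(frac0 HM (mulf_neq0 hx hx)); congr frac.
  rewrite /addP /=; congr (_, _).
  by apply: ofV; rewrite vaddV voppV pactvN addNr.
- move=> a b c; have [x [hx ->]] := frac_surj c.
  rewrite !frac_scaleQ //; congr frac; congr (_, _).
  by apply: ofV; rewrite !vscaleV scalerA.
- move=> a; have [x [hx ->]] := frac_surj a.
  rewrite !frac_scaleQ //; case: x hx => v d hx /=.
  by congr frac; congr (_, _); apply: ofV; rewrite vscaleV scale1r.
- move=> c a b.
  have [x [hx ->]] := frac_surj a; have [y [hy ->]] := frac_surj b.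
  rewrite frac_add // !frac_scaleQ ?addP_nz // frac_add //.
  congr frac; rewrite /addP /=; congr (_, _).
  by apply: ofV; rewrite !vscaleV !vaddV scalerDr !pactvZ.
- move=> a c d; have [x [hx ->]] := frac_surj a.
  rewrite !frac_scaleQ // frac_add // -(frac_scale HM hx (x := (vscale (c + d) x.1, x.2))) //.
  congr frac; rewrite /addP /pscale /=; congr (_, _).
  by apply: ofV; rewrite !vscaleV !vaddV scalerDl pactvD.
Qed.

Lemma Q_sl2 : is_sl2mod Q.
Proof.
split; split.
- exact: Q_vspace.
- split=> [a b|c a].
    have [x [hx ->]] := frac_surj a; have [y [hy ->]] := frac_surj b.
    rewrite frac_add // !frac_e ?addP_nz // frac_add ?shiftp_neq0 //.
    congr frac; rewrite /addP /=; congr (_, _); last by rewrite shiftpM.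
    by apply: ofV; rewrite !vaddV eD !e_pact.
  have [x [hx ->]] := frac_surj a.
  rewrite frac_scaleQ // !frac_e // frac_scaleQ ?shiftp_neq0 //.
  by congr frac; congr (_, _); apply: ofV; rewrite !vscaleV eZ.
- split=> [a b|c a].
    have [x [hx ->]] := frac_surj a; have [y [hy ->]] := frac_surj b.
    rewrite frac_add // !frac_f ?addP_nz // frac_add ?shiftp_neq0 //.
    congr frac; rewrite /addP /=; congr (_, _); last by rewrite shiftpM.
    by apply: ofV; rewrite !vaddV fD !f_pact.
  have [x [hx ->]] := frac_surj a.
  rewrite frac_scaleQ // !frac_f // frac_scaleQ ?shiftp_neq0 //.
  by congr frac; congr (_, _); apply: ofV; rewrite !vscaleV fZ.
- split=> [a b|c a].
    have [x [hx ->]] := frac_surj a; have [y [hy ->]] := frac_surj b.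
    rewrite frac_add // !frac_h ?addP_nz // frac_add //.
    congr frac; rewrite /addP /=; congr (_, _).
    by apply: ofV; rewrite !vaddV hD !h_pact.
  have [x [hx ->]] := frac_surj a.
  rewrite frac_scaleQ // !frac_h // frac_scaleQ //.
  by congr frac; congr (_, _); apply: ofV; rewrite !vscaleV hZ.
- move=> a; have [x [hx ->]] := frac_surj a.
  rewrite frac_f // frac_e ?shiftp_neq0 // frac_e // frac_f ?shiftp_neq0 //.
  rewrite !shiftpD subrr addrC subrr !shiftp0 frac_subsame // frac_h //.
  by congr frac; congr (_, _); apply: ofV; rewrite vsubE brEF.
- move=> a; have [x [hx ->]] := frac_surj a.
  rewrite frac_e // frac_h ?shiftp_neq0 // frac_h // frac_e //.
  rewrite frac_subsame ?shiftp_neq0 // frac_scaleQ ?shiftp_neq0 //.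
  by congr frac; congr (_, _); apply: ofV; rewrite vsubE brHE.
- move=> a; have [x [hx ->]] := frac_surj a.
  rewrite frac_f // frac_h ?shiftp_neq0 // frac_h // frac_f //.
  rewrite frac_subsame ?shiftp_neq0 // frac_scaleQ ?shiftp_neq0 //.
  by congr frac; congr (_, _); apply: ofV; rewrite vsubE brHF.
Qed.

Lemma Q_torsion_free : torsion_free Q.
Proof.
move=> p a hp; have [x [hx ->]] := frac_surj a.
rewrite pact_frac //.
change (frac (pact p x.1, x.2) = frac (vzero M, 1) -> frac x = frac (vzero M, 1)).
move=> /(@frac_rel _ _ HM (pact p x.1, x.2) (vzero M, 1) hx (oner_neq0 _)) /relE [s hs /= H].
apply: frac_eq; rewrite ?oner_neq0 //; apply/relE; exists (s * p); rewrite ?mulf_neq0 //=.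
move: H; rewrite vzeroV !pactv0 mulr1 => H.
by rewrite mulr1 pactM.
Qed.

Lemma Q_finite_rank : finite_rank M -> finite_rank Q.
Proof.
move=> [vs Hvs]; exists [seq frac (v, 1) | v <- vs] => a.
have [x [hx ->]] := frac_surj a; have [p hp [cs [hcs E]]] := Hvs x.1.
exists (p * x.2); first by rewrite mulf_neq0.
exists cs; split; first by rewrite size_map.
have -> : @pact _ Q (p * x.2) (frac x) = frac (pact p x.1, 1).
  rewrite pact_frac // -(frac_scale HM hx (x := (pact p x.1, 1))) ?oner_neq0 //.
  rewrite /pscale mulr1; congr frac; congr (_, _).
  by apply: ofV; rewrite -pactM mulrC.
rewrite E.
have -> : zip cs [seq frac (v, 1) | v <- vs] = [seq (z.1, frac (z.2, 1)) | z <- zip cs vs].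
  by elim: cs vs {hcs E Hvs} => [|c cs IH] [|v vs] //=; rewrite IH.
rewrite big_map; elim: (zip cs vs) => [|z s IH]; first by rewrite !big_nil.
by rewrite !big_cons -IH (@pact_frac _ _ HM z.1 (z.2, 1)) ?oner_neq0 // frac_addsame ?oner_neq0.
Qed.

Lemma Q_pact_bij p : p != 0 -> bijective (@pact _ Q p).
Proof.
move=> hp.
have OC : forall x : pr, x.2 != 0 ->
    frac ((rep (frac x)).1, p * (rep (frac x)).2) = frac (x.1, p * x.2).
  move=> x hx; apply: (@op_compat _ _ _ HM HM (fun z => (z.1, p * z.2)) id) => //.
  - by move=> z hz; rewrite mulf_neq0.
  - by move=> q z; rewrite /pscale /=; congr (_, _); ring.
exists (fun a => frac ((rep a).1, p * (rep a).2)).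
- move=> a; have [x [hx ->]] := frac_surj a.
  rewrite pact_frac // OC //.
  exact: (frac_scale HM hp hx).
- move=> a; have [x [hx ->]] := frac_surj a.
  rewrite OC // pact_frac ?mulf_neq0 //.
  exact: (frac_scale HM hp hx).
Qed.

Lemma Q_rational : tffr M -> rational_mod Q.
Proof.
move=> [_ _ hfr]; split; first split.
- exact: Q_sl2.
- exact: Q_torsion_free.
- exact: Q_finite_rank.
exact: Q_pact_bij.
Qed.

End Q3.

Definition eta (K : fieldType) (M : sl2data K) (v : M) : rat_data M := frac (v, 1).

Section Morph.
Variables (K : fieldType) (two : (2 : K) != 0) (M N : sl2data K).
Variables (HM : is_sl2mod M) (HN : is_sl2mod N) (g : M -> N) (Hg : sl2_morphism g).
Local Notation VM := (VT (sl2_vspace HM)).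
Local Notation VN := (VT (sl2_vspace HN)).

Lemma gD (u v : VM) : g (u + v) = (g u : VN) + (g v : VN) :> VN.
Proof. by have [[H _] _ _ _] := Hg; apply: H. Qed.
Lemma gZ a (v : VM) : g (a *: v) = a *: (g v : VN) :> VN.
Proof. by have [[_ H] _ _ _] := Hg; apply: H. Qed.
Lemma g_e (v : M) : g (rho_e v) = rho_e (g v).
Proof. by have [_ H _ _] := Hg; apply: H. Qed.
Lemma g_f (v : M) : g (rho_f v) = rho_f (g v).
Proof. by have [_ _ H _] := Hg; apply: H. Qed.
Lemma g_h (v : M) : g (rho_h v) = rho_h (g v).
Proof. by have [_ _ _ H] := Hg; apply: H. Qed.

Lemma g_L0 (v : VM) : g (L0 v) = L0 (g v : VN).
Proof. by rewrite /L0 /rhoL0 (gZ _ (rho_h v)) g_h. Qed.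

Lemma morph_pact p (v : M) : g (pact p v) = pact p (g v).
Proof.
rewrite (pactfE HM) (pactfE HN).
exact: (pactf_morph (@L0D _ _ HN) (@L0Z _ _ HN) gD gZ g_L0).
Qed.

Lemma rat_map_frac (x : M * {poly K}) : x.2 != 0 -> rat_map g (frac x) = frac (g x.1, x.2).
Proof.
move=> hx; apply: (@op_compat _ _ _ HM HN (fun z => (g z.1, z.2)) id) => // q z.
by rewrite /pscale /= morph_pact.
Qed.

Lemma rat_map_morph : sl2_morphism (rat_map g).
Proof.
split; first split.
- move=> a b; have [x [hx ->]] := frac_surj a; have [y [hy ->]] := frac_surj b.
  rewrite (frac_add HM) // !rat_map_frac ?addP_nz // (frac_add HN) //.
  congr frac; rewrite /addP /=; congr (_, _).
  by apply: (@ofV _ _ HN); rewrite !vaddV -!morph_pact gD.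
- move=> c a; have [x [hx ->]] := frac_surj a.
  rewrite (frac_scaleQ HM) // !rat_map_frac // (frac_scaleQ HN) //.
  by congr frac; congr (_, _); apply: (@ofV _ _ HN); rewrite !vscaleV gZ.
- move=> a; have [x [hx ->]] := frac_surj a.
  rewrite (frac_e two HM) // !rat_map_frac ?shiftp_neq0 // (frac_e two HN) //.
  by rewrite g_e.
- move=> a; have [x [hx ->]] := frac_surj a.
  rewrite (frac_f two HM) // !rat_map_frac ?shiftp_neq0 // (frac_f two HN) //.
  by rewrite g_f.
- move=> a; have [x [hx ->]] := frac_surj a.
  rewrite (frac_h HM) // !rat_map_frac // (frac_h HN) //.
  by rewrite g_h.
Qed.

Lemma eta_natural (v : M) : rat_map g (eta v) = eta (g v).
Proof. by rewrite /eta rat_map_frac ?oner_neq0. Qed.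

End Morph.

Lemma eta_morph (K : fieldType) (two : (2 : K) != 0) (M : sl2data K) (HM : is_sl2mod M) :
  sl2_morphism (@eta K M).
Proof.
rewrite /eta; split; first split.
- by move=> u v; rewrite (frac_addsame HM) ?oner_neq0.
- by move=> c v; rewrite (frac_scaleQ HM) ?oner_neq0.
- by move=> v; rewrite (frac_e two HM) ?oner_neq0 // shiftp1.
- by move=> v; rewrite (frac_f two HM) ?oner_neq0 // shiftp1.
- by move=> v; rewrite (frac_h HM) ?oner_neq0.
Qed.

Section Adj.
Variables (K : fieldType) (two : (2 : K) != 0) (M N : sl2data K).
Variables (HM : is_sl2mod M) (HN : is_sl2mod N) (g : M -> N) (Hg : sl2_morphism g).
Hypothesis Ninj : forall p, p != 0 -> injective (@pact _ N p).
Hypothesis Nsurj : forall p (w : N), p != 0 -> exists u, pact p u = w.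
Local Notation VM := (VT (sl2_vspace HM)).
Local Notation VN := (VT (sl2_vspace HN)).

Lemma hex (a : rat_data M) : exists w : N, pact (rep a).2 w = g (rep a).1.
Proof. exact: Nsurj (rep_nz a). Qed.

Definition hmap (a : rat_data M) : N :=
  proj1_sig (ClassicalEpsilon.constructive_indefinite_description _ (hex a)).

Lemma hmap_spec a : pact (rep a).2 (hmap a) = g (rep a).1.
Proof. exact: (proj2_sig (ClassicalEpsilon.constructive_indefinite_description _ (hex a))). Qed.

Lemma hmap_frac (x : M * {poly K}) : x.2 != 0 -> pact x.2 (hmap (frac x)) = g x.1.
Proof.
move=> hx; have [p [q [hp hq E]]] := rep_pscale HM hx.
case: E => E1 E2; apply: (Ninj hq).
rewrite -(morph_pact HM HN Hg) -E1 (morph_pact HM HN Hg) -hmap_spec.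
apply: (@ofV _ _ HN); rewrite -!pactM.
by rewrite E2.
Qed.

Lemma hmap_uniq (x : M * {poly K}) (w : N) : x.2 != 0 -> pact x.2 w = g x.1 ->
  hmap (frac x) = w.
Proof. by move=> hx H; apply: (Ninj hx); rewrite hmap_frac. Qed.

Lemma hmap_morph : sl2_morphism hmap.
Proof.
split; first split.
- move=> a b; have [x [hx ->]] := frac_surj a; have [y [hy ->]] := frac_surj b.
  rewrite (frac_add HM) //; apply: hmap_uniq; first exact: addP_nz.
  apply: (@ofV _ _ HN); rewrite /addP /= !vaddV (gD HN Hg) !(morph_pact HM HN Hg).
  rewrite pactvD -!hmap_frac // -!pactM.
  by congr (_ + _); apply: pact_eqp; ring.
- move=> c a; have [x [hx ->]] := frac_surj a.
  rewrite (frac_scaleQ HM) //; apply: hmap_uniq => //=.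
  by apply: (@ofV _ _ HN); rewrite !vscaleV pactvZ hmap_frac // (gZ HN Hg).
- move=> a; have [x [hx ->]] := frac_surj a.
  rewrite (frac_e two HM) //; apply: hmap_uniq => /=; first exact: shiftp_neq0.
  by rewrite (g_e Hg) -hmap_frac // (e_pact two (HM := HN)).
- move=> a; have [x [hx ->]] := frac_surj a.
  rewrite (frac_f two HM) //; apply: hmap_uniq => /=; first exact: shiftp_neq0.
  by rewrite (g_f Hg) -hmap_frac // (f_pact two (HM := HN)).
- move=> a; have [x [hx ->]] := frac_surj a.
  rewrite (frac_h HM) //; apply: hmap_uniq => //=.
  by rewrite (g_h Hg) -hmap_frac // (h_pact (HM := HN)).
Qed.

Lemma hmap_eta (v : M) : hmap (eta v) = g v.
Proof. by apply: hmap_uniq; rewrite ?oner_neq0 //= (pact1 (HM := HN)). Qed.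

Lemma hmap_unique (h : rat_data M -> N) : sl2_morphism h ->
  (forall v, h (eta v) = g v) -> forall a, h a = hmap a.
Proof.
move=> Hh Heta a; have [x [hx ->]] := frac_surj a.
apply: esym; apply: hmap_uniq => //.
rewrite -(morph_pact (Q_sl2 two HM) HN Hh) (pact_frac HM) //.
have -> : frac (pact x.2 x.1, x.2) = frac (x.1, 1).
  by rewrite -(frac_scale HM hx (x := (x.1, 1))) ?oner_neq0 // /pscale /= mulr1.
exact: Heta.
Qed.

End Adj.

Lemma id_morph (K : fieldType) (M : sl2data K) : sl2_morphism (fun v : M => v).
Proof. by []. Qed.

Lemma rational_inj (K : fieldType) (W : sl2data K) : rational_mod W ->
  forall p, p != 0 -> injective (@pact _ W p).
Proof. by move=> [_ H] p hp; apply: bij_inj; apply: H. Qed.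

Lemma rational_surj (K : fieldType) (W : sl2data K) : rational_mod W ->
  forall p (w : W), p != 0 -> exists u, pact p u = w.
Proof. by move=> [_ H] p w hp; have [g' _ Hc] := H p hp; exists (g' w). Qed.

Lemma rational_sl2 (K : fieldType) (W : sl2data K) : rational_mod W -> is_sl2mod W.
Proof. by move=> [[]]. Qed.

Lemma eta_bij (K : fieldType) (W : sl2data K) (HR : rational_mod W) : bijective (@eta K W).
Proof.
have HW := rational_sl2 HR.
pose hm := hmap (fun v : W => v) (rational_surj HR).
exists hm => [v|a].
  exact: (hmap_eta HW HW (id_morph W) (rational_inj HR) (rational_surj HR)).
have [x [hx ->]] := frac_surj a.
rewrite /eta -(frac_scale HW hx (x := (hm (frac x), 1))) ?oner_neq0 // /pscale /= mulr1.
by rewrite (hmap_frac HW HW (id_morph W) (rational_inj HR) (rational_surj HR)) //; case: x hx.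
Qed.

Lemma faithful (K : fieldType) (V W : sl2data K) (g1 g2 : V -> W) :
  is_sl2mod V -> is_sl2mod W -> torsion_free W ->
  sl2_morphism g1 -> sl2_morphism g2 ->
  (forall a : rat_data V, rat_map g1 a = rat_map g2 a) -> forall v : V, g1 v = g2 v.
Proof.
move=> HV HW Ht H1 H2 E v.
have := E (eta v); rewrite (eta_natural HV HW H1) (eta_natural HV HW H2) /eta.
move=> /(@frac_rel _ _ HW (g1 v, 1) (g2 v, 1) (oner_neq0 _) (oner_neq0 _)) /(relE HW) [s hs /= H].
rewrite !mulr1 in H.
have Hz : pact s (vsub (g1 v) (g2 v)) = vzero W.
  by apply: (@ofV _ _ HW); rewrite vsubE pactvB H subrr.
move/(@toV _ _ HW): (Ht _ _ hs Hz).
by rewrite vsubE (vzeroV HW) => /subr0_eq.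
Qed.

Theorem theorem7p7 (R : realType) :
  (* F_rat is well defined: it maps sl(2)-Mod_tffr into R ... *)
  (forall V : sl2data R[i], tffr V -> rational_mod (rat_data V)) /\
  (* ... and morphisms to morphisms *)
  (forall (V W : sl2data R[i]) (g : V -> W), tffr V -> tffr W ->
     sl2_morphism g -> sl2_morphism (rat_map g)) /\
  (* i_tffr is right adjoint to F_rat: there are universal arrows
     eta_V : V -> i_tffr (F_rat V), natural w.r.t. F_rat, ... *)
  (exists eta : forall V : sl2data R[i], V -> rat_data V,
     (forall V : sl2data R[i], tffr V -> sl2_morphism (eta V)) /\
     (forall (V W : sl2data R[i]) (g : V -> W), tffr V -> tffr W ->
        sl2_morphism g -> forall v : V, rat_map g (eta V v) = eta W (g v)) /\
     (forall (V W : sl2data R[i]) (g : V -> W), tffr V -> rational_mod W ->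
        sl2_morphism g ->
        exists! h : rat_data V -> W, sl2_morphism h /\ forall v : V, h (eta V v) = g v) /\
     (* ... and the unit is an isomorphism on the full subcategory R
        (R is a reflective subcategory with reflector F_rat) *)
     (forall W : sl2data R[i], rational_mod W -> bijective (eta W))) /\
  (* F_rat is faithful *)
  (forall (V W : sl2data R[i]) (g1 g2 : V -> W), tffr V -> tffr W ->
     sl2_morphism g1 -> sl2_morphism g2 ->
     (forall a : rat_data V, rat_map g1 a = rat_map g2 a) ->
     forall v : V, g1 v = g2 v).
Proof.
have two : (2 : R[i]) != 0 by rewrite pnatr_eq0.
split; first by move=> V HV; apply: (Q_rational two); case: HV.
split; first by move=> V W g [HV _ _] [HW _ _] Hg; apply: (rat_map_morph two HV HW Hg).
split.
  exists (@eta _); split; first by move=> V [HV _ _]; apply: eta_morph.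
  split; first by move=> V W g [HV _ _] [HW _ _] Hg v; apply: (eta_natural HV HW Hg).
  split; last by move=> W HR; apply: eta_bij.
  move=> V W g [HV _ _] HR Hg.
  have HW := rational_sl2 HR.
  exists (hmap g (rational_surj HR)); split.
    split; first exact: (hmap_morph two HV HW Hg (rational_inj HR) (rational_surj HR)).
    exact: (hmap_eta HV HW Hg (rational_inj HR) (rational_surj HR)).
  move=> h [Hh Heta]; apply: functional_extensionality => a.
  by rewrite (hmap_unique two HV HW Hg (rational_inj HR) (rational_surj HR) Hh Heta).
move=> V W g1 g2 [HV _ _] [HW Ht _]; exact: faithful.
Qed.
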